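(* Let $\varphi:\Sigma\to I$ depend only on finitely many coordinates of $\omega$, and suppose its graph $\Gamma$ drifts up (resp. down). For $n\ge0$ let $\varphi_n$ be the function whose graph is $F^n(\Gamma)$, i.e. $\varphi_n(\omega)=f_{\omega_{-1}}\circ\dots\circ f_{\omega_{-n}}(\varphi(\sigma^{-n}\omega))$. Then: (1) the pointwise limit $\varphi_{+\infty}(\omega)=\lim_{n\to+\infty}\varphi_n(\omega)$ exists for every $\omega$ and defines a measurable function $\varphi_{+\infty}:\Sigma\to I$; (2) $\varphi_{+\infty}(\omega)$ does not depend on the future of $\omega$: if $\omega_j=\omega'_j$ for all $j\le-1$ then $\varphi_{+\infty}(\omega)=\varphi_{+\infty}(\omega')$; (3) $\varphi_{+\infty}$ is $F$-invariant: $\varphi_{+\infty}(\sigma\omega)=f_{\omega_0}(\varphi_{+\infty}(\omega))$.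
   Context: $\Sigma$: two-sided transitive subshift of finite type over $\{1,\dots,N\}$ with left shift $\sigma$, $(\sigma\omega)_n=\omega_{n+1}$. $I=[0,1]$; $F(\omega,x)=(\sigma\omega,f_{\omega_0}(x))$ with $f_k:I\to I$ strictly increasing $C^1$ diffeomorphisms onto their images. For functions $\psi_1,\psi_2:\Sigma\to I$, $\psi_1<\psi_2$ means $\psi_1(\omega)<\psi_2(\omega)$ for all $\omega$; the same notation is used for their graphs. $F(\Gamma)$ is again the graph of a function; the graph $\Gamma$ drifts up (down) if $F(\Gamma)>\Gamma$ (resp. $F(\Gamma)<\Gamma$). *)

(* Defs.v *)
From Stdlib Require Import Reals ZArith.
Open Scope R_scope.

(* Two-sided sequences over the alphabet {1,...,N} (encoded in nat). *)
Definition seqZ := Z -> nat.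

Definition shiftL (w : seqZ) : seqZ := fun n => w (n + 1)%Z.
Definition shiftinv (w : seqZ) : seqZ := fun n => w (n - 1)%Z.

Definition in_Sigma (N : nat) (A : nat -> nat -> bool) (w : seqZ) : Prop :=
  forall n : Z, (1 <= w n <= N)%nat /\ A (w n) (w (n + 1)%Z) = true.

Inductive apath (A : nat -> nat -> bool) : nat -> nat -> Prop :=
| apath_one i j : A i j = true -> apath A i j
| apath_cons i j k : A i j = true -> apath A j k -> apath A i k.

Definition transitive_SFT (N : nat) (A : nat -> nat -> bool) : Prop :=
  forall i j, (1 <= i <= N)%nat -> (1 <= j <= N)%nat -> apath A i j.

Definition inI (x : R) : Prop := 0 <= x <= 1.

(* f : I -> I strictly increasing C^1 diffeomorphism onto its image:
   maps I into I, strictly increasing on I, has a derivative (within I)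
   which is continuous on I and positive (so the inverse is C^1 too). *)
Definition C1_diffeo_incr_on_I (f : R -> R) : Prop :=
  (forall x, inI x -> inI (f x)) /\
  (forall x y, inI x -> inI y -> x < y -> f x < f y) /\
  exists g : R -> R,
    (forall x, inI x -> 0 < g x) /\
    (forall x, inI x -> forall eps, 0 < eps -> exists delta, 0 < delta /\
        forall y, inI y -> y <> x -> Rabs (y - x) < delta ->
          Rabs ((f y - f x) / (y - x) - g x) < eps) /\
    (forall x, inI x -> forall eps, 0 < eps -> exists delta, 0 < delta /\
        forall y, inI y -> Rabs (y - x) < delta -> Rabs (g y - g x) < eps).

Definition finitely_many_coords (N : nat) (A : nat -> nat -> bool)
  (phi : seqZ -> R) : Prop :=
  exists M : Z, forall w w', in_Sigma N A w -> in_Sigma N A w' ->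
    (forall j, (- M <= j <= M)%Z -> w j = w' j) -> phi w = phi w'.

(* phi_n : the function whose graph is F^n(graph phi):
   phi_0 = phi, phi_{n+1}(w) = f_{w_{-1}} (phi_n (sigma^{-1} w)),
   i.e. phi_n(w) = f_{w_{-1}} o ... o f_{w_{-n}} (phi (sigma^{-n} w)). *)
Fixpoint iter_graph (f : nat -> R -> R) (phi : seqZ -> R) (n : nat) : seqZ -> R :=
  match n with
  | O => phi
  | S m => fun w => f (w (-1)%Z) (iter_graph f phi m (shiftinv w))
  end.

Definition drifts_up (N : nat) (A : nat -> nat -> bool) (f : nat -> R -> R)
  (phi : seqZ -> R) : Prop :=
  forall w, in_Sigma N A w -> phi w < iter_graph f phi 1 w.

Definition drifts_down (N : nat) (A : nat -> nat -> bool) (f : nat -> R -> R)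
  (phi : seqZ -> R) : Prop :=
  forall w, in_Sigma N A w -> iter_graph f phi 1 w < phi w.

(* sigma-algebra on sequences generated by the cylinder sets {w | w_j = a};
   its trace on Sigma is the Borel sigma-algebra of Sigma (product topology). *)
Inductive cyl_sigma : (seqZ -> Prop) -> Prop :=
| cs_cyl (j : Z) (a : nat) : cyl_sigma (fun w => w j = a)
| cs_compl (S : seqZ -> Prop) : cyl_sigma S -> cyl_sigma (fun w => ~ S w)
| cs_union (S : nat -> seqZ -> Prop) :
    (forall n, cyl_sigma (S n)) -> cyl_sigma (fun w => exists n, S n w)
| cs_ext (S T : seqZ -> Prop) :
    (forall w, S w <-> T w) -> cyl_sigma S -> cyl_sigma T.

Definition measurable_on_Sigma (N : nat) (A : nat -> nat -> bool)
  (psi : seqZ -> R) : Prop :=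
  forall a : R, exists S, cyl_sigma S /\
    forall w, in_Sigma N A w -> (psi w <= a <-> S w).

(* Main.v *)
Require Import Defs.
From Stdlib Require Import Reals ZArith Lia Lra Classical FunctionalExtensionality ClassicalEpsilon.
Open Scope R_scope.

Lemma cs_or (P Q : seqZ -> Prop) : cyl_sigma P -> cyl_sigma Q -> cyl_sigma (fun w => P w \/ Q w).
Proof.
  intros HP HQ.
  apply (cs_ext (fun w => exists n, (match n with O => P | S _ => Q end) w)).
  - intros w; split.
    + intros [[|n] H]; auto.
    + intros [H|H]; [exists O | exists 1%nat]; auto.
  - apply cs_union. intros [|n]; auto.
Qed.

Lemma cs_and (P Q : seqZ -> Prop) : cyl_sigma P -> cyl_sigma Q -> cyl_sigma (fun w => P w /\ Q w).
Proof.
  intros HP HQ.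
  apply (cs_ext (fun w => ~ (~ P w \/ ~ Q w))).
  - intros w; split; [intros H; split; apply NNPP; tauto | tauto].
  - apply cs_compl, cs_or; apply cs_compl; auto.
Qed.

Lemma cs_True : cyl_sigma (fun _ => True).
Proof.
  apply (cs_ext (fun w => w 0%Z = O \/ ~ w 0%Z = O)).
  - intros w; split; auto. intros _; apply classic.
  - apply cs_or; [|apply cs_compl]; apply cs_cyl.
Qed.

Lemma cs_False : cyl_sigma (fun _ => False).
Proof.
  apply (cs_ext (fun w => ~ True)). - tauto. - apply cs_compl, cs_True.
Qed.

Lemma cs_forall (S : nat -> seqZ -> Prop) : (forall n, cyl_sigma (S n)) ->
  cyl_sigma (fun w => forall n, S n w).
Proof.
  intros H. apply (cs_ext (fun w => ~ exists n, ~ S n w)).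
  - intros w; split.
    + intros H1 n. apply NNPP; intros H2; apply H1; eauto.
    + intros H1 [n H2]; auto.
  - apply cs_compl, cs_union; intros n; apply cs_compl; auto.
Qed.

Lemma cs_exists (S : nat -> seqZ -> Prop) : (forall n, cyl_sigma (S n)) ->
  cyl_sigma (fun w => exists n, S n w).
Proof. apply cs_union. Qed.

Definition upd (w : seqZ) (j : Z) (a : nat) : seqZ :=
  fun k => if Z.eq_dec k j then a else w k.

Lemma dep_cyl (lo : Z) (k : nat) : forall P : seqZ -> Prop,
  (forall w w', (forall j, (lo <= j < lo + Z.of_nat k)%Z -> w j = w' j) -> P w -> P w') ->
  cyl_sigma P.
Proof.
  induction k as [|k IH]; intros P HP.
  - destruct (classic (exists w0, P w0)) as [[w0 H0]|Hn].
    + apply (cs_ext (fun _ => True)); [|apply cs_True].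
      intros w; split; auto. intros _. apply (HP w0); auto. intros j Hj; lia.
    + apply (cs_ext (fun _ => False)); [|apply cs_False].
      intros w; split; [tauto|]. intros Hw; apply Hn; eauto.
  - set (j0 := (lo + Z.of_nat k)%Z).
    apply (cs_ext (fun w => exists a : nat, w j0 = a /\ P (upd w j0 a))).
    + intros w; split.
      * intros [a [Ha Hp]]. apply (HP (upd w j0 a)); auto.
        intros j _. unfold upd. destruct (Z.eq_dec j j0); subst; auto.
      * intros Hp. exists (w j0); split; auto. apply (HP w); auto.
        intros j _. unfold upd. destruct (Z.eq_dec j j0); subst; auto.
    + apply cs_exists. intros a. apply cs_and; [apply cs_cyl|].
      apply IH. intros w w' Hww' Hp. apply (HP (upd w j0 a)); auto.
      intros j Hj. unfold upd. destruct (Z.eq_dec j j0); auto.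
      apply Hww'. lia.
Qed.

Lemma shiftinv_Sigma N A w : in_Sigma N A w -> in_Sigma N A (shiftinv w).
Proof.
  intros H n. unfold shiftinv. destruct (H (n - 1)%Z) as [H1 H2].
  replace (n + 1 - 1)%Z with (n - 1 + 1)%Z by lia. auto.
Qed.

Lemma shiftL_Sigma N A w : in_Sigma N A w -> in_Sigma N A (shiftL w).
Proof.
  intros H n. unfold shiftL. destruct (H (n + 1)%Z) as [H1 H2]. auto.
Qed.

Lemma iter_I N A f phi :
  (forall k, (1 <= k <= N)%nat -> C1_diffeo_incr_on_I (f k)) ->
  (forall w, in_Sigma N A w -> inI (phi w)) ->
  forall n w, in_Sigma N A w -> inI (iter_graph f phi n w).
Proof.
  intros Hf Hphi n; induction n as [|n IH]; intros w Hw; simpl; auto.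
  destruct (Hw (-1)%Z) as [Hr _]. apply (proj1 (Hf _ Hr)).
  apply IH, shiftinv_Sigma; auto.
Qed.

Lemma iter_up N A f phi :
  (forall k, (1 <= k <= N)%nat -> C1_diffeo_incr_on_I (f k)) ->
  (forall w, in_Sigma N A w -> inI (phi w)) ->
  drifts_up N A f phi ->
  forall n w, in_Sigma N A w -> iter_graph f phi n w < iter_graph f phi (S n) w.
Proof.
  intros Hf Hphi Hd n; induction n as [|n IH]; intros w Hw.
  - apply Hd; auto.
  - change (f (w (-1)%Z) (iter_graph f phi n (shiftinv w)) <
            f (w (-1)%Z) (iter_graph f phi (S n) (shiftinv w))).
    destruct (Hw (-1)%Z) as [Hr _]. apply (proj1 (proj2 (Hf _ Hr)));
    try apply IH; try apply (iter_I N A); auto; try apply shiftinv_Sigma; auto.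
Qed.

Lemma iter_down N A f phi :
  (forall k, (1 <= k <= N)%nat -> C1_diffeo_incr_on_I (f k)) ->
  (forall w, in_Sigma N A w -> inI (phi w)) ->
  drifts_down N A f phi ->
  forall n w, in_Sigma N A w -> iter_graph f phi (S n) w < iter_graph f phi n w.
Proof.
  intros Hf Hphi Hd n; induction n as [|n IH]; intros w Hw.
  - apply Hd; auto.
  - change (f (w (-1)%Z) (iter_graph f phi (S n) (shiftinv w)) <
            f (w (-1)%Z) (iter_graph f phi n (shiftinv w))).
    destruct (Hw (-1)%Z) as [Hr _]. apply (proj1 (proj2 (Hf _ Hr)));
    try apply IH; try apply (iter_I N A); auto; try apply shiftinv_Sigma; auto.
Qed.

Lemma iter_dep N A f phi (K : nat) :
  (forall w w', in_Sigma N A w -> in_Sigma N A w' ->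
    (forall j, (- Z.of_nat K <= j <= Z.of_nat K)%Z -> w j = w' j) -> phi w = phi w') ->
  forall n w w', in_Sigma N A w -> in_Sigma N A w' ->
    (forall j, (- (Z.of_nat K + Z.of_nat n) <= j <= Z.max (Z.of_nat K - Z.of_nat n) (-1))%Z ->
       w j = w' j) ->
    iter_graph f phi n w = iter_graph f phi n w'.
Proof.
  intros Hphi n; induction n as [|n IH]; intros w w' Hw Hw' Hj; simpl.
  - apply Hphi; auto. intros j Hj'. apply Hj; lia.
  - rewrite (Hj (-1)%Z) by lia. f_equal. apply IH; try apply shiftinv_Sigma; auto.
    intros j Hj'. unfold shiftinv. apply Hj. lia.
Qed.

Lemma shiftinv_shiftL w : shiftinv (shiftL w) = w.
Proof.
  apply functional_extensionality; intros n. unfold shiftinv, shiftL. f_equal; lia.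
Qed.

Lemma iter_shift f phi n w :
  iter_graph f phi (S n) (shiftL w) = f (w 0%Z) (iter_graph f phi n w).
Proof.
  simpl. rewrite shiftinv_shiftL. reflexivity.
Qed.

Lemma cv_shift u l m : Un_cv u l -> Un_cv (fun n => u (n + m)%nat) l.
Proof.
  intros H eps He. destruct (H eps He) as [N HN]. exists N. intros n Hn. apply HN. lia.
Qed.

Lemma cv_ub u l b : Un_cv u l -> (forall n, u n <= b) -> l <= b.
Proof.
  intros H Hb. destruct (Rle_or_lt l b) as [|Hl]; auto.
  destruct (H (l - b)) as [N HN]; [lra|].
  specialize (HN N (le_n _)). specialize (Hb N). unfold Rdist in HN.
  apply Rabs_def2 in HN. lra.
Qed.

Lemma cv_lb u l b : Un_cv u l -> (forall n, b <= u n) -> b <= l.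
Proof.
  intros H Hb. destruct (Rle_or_lt b l) as [|Hl]; auto.
  destruct (H (b - l)) as [N HN]; [lra|].
  specialize (HN N (le_n _)). specialize (Hb N). unfold Rdist in HN.
  apply Rabs_def2 in HN. lra.
Qed.

Lemma C1_cont f : C1_diffeo_incr_on_I f -> forall x, inI x -> forall eps, 0 < eps ->
  exists delta, 0 < delta /\ forall y, inI y -> Rabs (y - x) < delta -> Rabs (f y - f x) < eps.
Proof.
  intros [_ [_ [g [Hg [Hd _]]]]] x Hx eps He.
  destruct (Hd x Hx 1 Rlt_0_1) as [d1 [Hd1 H1]].
  set (c := Rabs (g x) + 1).
  assert (Hc : 0 < c) by (unfold c; pose proof (Rabs_pos (g x)); lra).
  exists (Rmin d1 (eps / c)). split.
  { apply Rmin_pos; auto. apply Rdiv_lt_0_compat; auto. }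
  intros y Hy Hxy.
  destruct (Req_dec y x) as [->|Hne].
  { replace (f x - f x) with 0 by ring. rewrite Rabs_R0; auto. }
  assert (Hyx : Rabs (y - x) < d1) by (eapply Rlt_le_trans; [exact Hxy| apply Rmin_l]).
  assert (Hyx2 : Rabs (y - x) < eps / c) by (eapply Rlt_le_trans; [exact Hxy| apply Rmin_r]).
  specialize (H1 y Hy Hne Hyx).
  assert (Hq : Rabs ((f y - f x) / (y - x)) < c).
  { unfold c. pose proof (Rabs_triang_inv ((f y - f x) / (y - x)) (g x)). lra. }
  assert (Hnz : y - x <> 0) by lra.
  replace (f y - f x) with ((f y - f x) / (y - x) * (y - x)) by (field; auto).
  rewrite Rabs_mult.
  assert (Hp : 0 < Rabs (y - x)) by (apply Rabs_pos_lt; auto).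
  apply Rle_lt_trans with (c * Rabs (y - x)).
  { apply Rmult_le_compat_r; lra. }
  replace eps with (c * (eps / c)) by (field; lra).
  apply Rmult_lt_compat_l; auto.
Qed.

Lemma cv_f f u l : C1_diffeo_incr_on_I f -> (forall n, inI (u n)) -> inI l ->
  Un_cv u l -> Un_cv (fun n => f (u n)) (f l).
Proof.
  intros Hf Hu Hl Hc eps He.
  destruct (C1_cont f Hf l Hl eps He) as [d [Hd Hd']].
  destruct (Hc d Hd) as [N HN]. exists N. intros n Hn.
  unfold Rdist. apply Hd'; auto. apply HN; auto.
Qed.

Definition Tset N A f phi (K : nat) (Q : R -> Prop) (n : nat) (w : seqZ) : Prop :=
  exists w', in_Sigma N A w' /\
    (forall j, (- (Z.of_nat K + Z.of_nat n) <= j <= Z.of_nat K)%Z -> w j = w' j) /\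
    Q (iter_graph f phi n w').

Lemma Tset_ok N A f phi (K : nat) :
  (forall w w', in_Sigma N A w -> in_Sigma N A w' ->
    (forall j, (- Z.of_nat K <= j <= Z.of_nat K)%Z -> w j = w' j) -> phi w = phi w') ->
  forall Q n, cyl_sigma (Tset N A f phi K Q n) /\
    forall w, in_Sigma N A w -> (Tset N A f phi K Q n w <-> Q (iter_graph f phi n w)).
Proof.
  intros HK Q n. split.
  - apply (dep_cyl (- (Z.of_nat K + Z.of_nat n)) (2 * K + n + 1)).
    intros w w' Hww [w'' [H1 [H2 H3]]]. exists w''. split; auto. split; auto.
    intros j Hj. rewrite <- Hww by lia. auto.
  - intros w Hw. split.
    + intros [w'' [H1 [H2 H3]]].
      rewrite (iter_dep N A f phi K HK n w w''); auto.
      intros j Hj. apply H2. lia.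
    + intros HQ. exists w. auto.
Qed.

Theorem mainTheorem13 (N : nat) (A : nat -> nat -> bool) (f : nat -> R -> R)
  (phi : seqZ -> R) :
  (1 <= N)%nat ->
  transitive_SFT N A ->
  (forall k, (1 <= k <= N)%nat -> C1_diffeo_incr_on_I (f k)) ->
  (forall w, in_Sigma N A w -> inI (phi w)) ->
  finitely_many_coords N A phi ->
  (drifts_up N A f phi \/ drifts_down N A f phi) ->
  exists phi_inf : seqZ -> R,
    (forall w, in_Sigma N A w ->
       Un_cv (fun n => iter_graph f phi n w) (phi_inf w)) /\
    (forall w, in_Sigma N A w -> inI (phi_inf w)) /\
    measurable_on_Sigma N A phi_inf /\
    (forall w w', in_Sigma N A w -> in_Sigma N A w' ->
       (forall j, (j <= -1)%Z -> w j = w' j) -> phi_inf w = phi_inf w') /\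
    (forall w, in_Sigma N A w -> phi_inf (shiftL w) = f (w (0%Z)) (phi_inf w)).
Proof.
  intros HN Htr Hf Hphi [M HM] Hd.
  set (K := Z.to_nat M).
  assert (HK : forall w w', in_Sigma N A w -> in_Sigma N A w' ->
    (forall j, (- Z.of_nat K <= j <= Z.of_nat K)%Z -> w j = w' j) -> phi w = phi w').
  { intros w w' Hw Hw' H. apply HM; auto. intros j Hj. apply H. unfold K. lia. }
  assert (HI := iter_I N A f phi Hf Hphi).
  assert (Hex : forall w, in_Sigma N A w ->
    exists l, Un_cv (fun n => iter_graph f phi n w) l).
  { intros w Hw. destruct Hd as [Hu|Hdn].
    - destruct (growing_cv (fun n => iter_graph f phi n w)) as [l Hl].
      + intros n. left. apply (iter_up N A f phi Hf Hphi Hu n w Hw).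
      + exists 1. intros x [i ->]. apply (HI i w Hw).
      + eauto.
    - destruct (decreasing_cv (fun n => iter_graph f phi n w)) as [l Hl].
      + intros n. left. apply (iter_down N A f phi Hf Hphi Hdn n w Hw).
      + exists 0. intros x [i ->]. unfold opp_seq. pose proof (HI i w Hw) as Hi. unfold inI in Hi. lra.
      + eauto. }
  set (phi_inf := fun w => epsilon (inhabits 0)
                  (fun l => Un_cv (fun n => iter_graph f phi n w) l)).
  assert (Hcv : forall w, in_Sigma N A w ->
    Un_cv (fun n => iter_graph f phi n w) (phi_inf w)).
  { intros w Hw. unfold phi_inf. apply epsilon_spec. auto. }
  exists phi_inf. split; [exact Hcv|]. split.
  { intros w Hw. split.
    - apply (cv_lb _ _ 0 (Hcv w Hw)). intros n. apply (HI n w Hw).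
    - apply (cv_ub _ _ 1 (Hcv w Hw)). intros n. apply (HI n w Hw). }
  split.
  { intros a. destruct Hd as [Hu|Hdn].
    - exists (fun w => forall n, Tset N A f phi K (fun x => x <= a) n w). split.
      + apply cs_forall. intros n. apply (Tset_ok N A f phi K HK).
      + intros w Hw. split.
        * intros Ha n. apply (proj2 (Tset_ok N A f phi K HK _ n) w Hw).
          apply Rle_trans with (phi_inf w); auto.
          apply (growing_ineq (fun n => iter_graph f phi n w)); auto. intros m. left. apply (iter_up N A f phi Hf Hphi Hu m w Hw).
        * intros H. apply (cv_ub _ _ a (Hcv w Hw)). intros n.
          apply (proj2 (Tset_ok N A f phi K HK (fun x => x <= a) n) w Hw). auto.
    - exists (fun w => forall m, exists n,
               Tset N A f phi K (fun x => x < a + / INR (S m)) n w). split.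
      + apply cs_forall. intros m. apply cs_exists. intros n.
        apply (Tset_ok N A f phi K HK).
      + intros w Hw.
        assert (Hdec : Un_decreasing (fun n => iter_graph f phi n w)).
        { intros m. left. apply (iter_down N A f phi Hf Hphi Hdn m w Hw). }
        split.
        * intros Ha m. 
          assert (Hpos : 0 < / INR (S m)) by (apply Rinv_0_lt_compat, lt_0_INR; lia).
          destruct (Hcv w Hw _ Hpos) as [n0 Hn0]. exists n0.
          apply (proj2 (Tset_ok N A f phi K HK _ n0) w Hw).
          specialize (Hn0 n0 (le_n _)). unfold Rdist in Hn0. apply Rabs_def2 in Hn0. lra.
        * intros H. destruct (Rle_or_lt (phi_inf w) a) as [|Hl]; auto. exfalso.
          destruct (archimed_cor1 (phi_inf w - a)) as [N0 [HN0 HN0p]]; [lra|].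
          destruct (H (N0 - 1)%nat) as [n Hn].
          apply (proj2 (Tset_ok N A f phi K HK _ n) w Hw) in Hn.
          replace (S (N0 - 1)) with N0 in Hn by lia.
          pose proof (decreasing_ineq _ _ Hdec (Hcv w Hw) n). simpl in *. lra. }
  split.
  { intros w w' Hw Hw' Hj.
    assert (He : (fun n => iter_graph f phi (n + (K + 1)) w') =
                 (fun n => iter_graph f phi (n + (K + 1)) w)).
    { apply functional_extensionality; intros n.
      apply (iter_dep N A f phi K HK); auto. intros j Hj'. symmetry. apply Hj. lia. }
    pose proof (cv_shift _ _ (K + 1) (Hcv w Hw)) as H1.
    pose proof (cv_shift _ _ (K + 1) (Hcv w' Hw')) as H2.
    simpl in H2. rewrite He in H2. eapply UL_sequence; eauto. }
  intros w Hw.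
  pose proof (cv_shift _ _ 1 (Hcv _ (shiftL_Sigma N A w Hw))) as H1.
  assert (He : (fun n => iter_graph f phi (n + 1) (shiftL w)) =
               (fun n => f (w 0%Z) (iter_graph f phi n w))).
  { apply functional_extensionality; intros n. rewrite Nat.add_1_r. apply iter_shift. }
  simpl in H1. rewrite He in H1.
  destruct (Hw 0%Z) as [Hr _].
  eapply UL_sequence; [exact H1|]. apply cv_f; auto.
  split.
  - apply (cv_lb _ _ 0 (Hcv w Hw)). intros n. apply (HI n w Hw).
  - apply (cv_ub _ _ 1 (Hcv w Hw)). intros n. apply (HI n w Hw).
Qed.
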